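(* Let $m, n, k, l, t, r$ be positive integers such that $t\geq 2$, $k\geq l \geq t+r$ and $\min\{m, n\}\geq k+l-t+2$. Let $i,j\in [\max \{ m, n\}]$ with $i<j$. Let $\mathcal{A}\subseteq\binom{[n]}{k}$ and $\mathcal{B}\subseteq\binom{[m]}{l}$ be cross-$t$-intersecting families. Suppose there exists a $(t+2r)$-element subset $T\subset [\min\{m, n\}]$ such that \[S_{ij}(\mathcal{A})=\left\{A \in \binom{[n]}{k} : |A \cap T| \geq t+r \right\}\quad\text{and}\quad S_{ij}(\mathcal{B})=\left\{B \in \binom{[m]}{l} : |B \cap T| \geq t+r \right\}.\] Then there is a $(t+2r)$-element subset $T'\subset [\min\{m, n\}]$ such that \[\mathcal{A}=\left\{A \in \binom{[n]}{k} : |A \cap T'| \geq t+r \right\}\quad\text{and}\quad\mathcal{B}=\left\{B \in \binom{[m]}{l} : |B \cap T'| \geq t+r \right\}.\]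
   Context: $[n]=\{1,\dots,n\}$ and $\binom{D}{k}$ denotes the family of all $k$-element subsets of a finite set $D$. Families $\mathcal{A},\mathcal{B}$ are cross-$t$-intersecting if $|A\cap B|\ge t$ for all $A\in\mathcal{A}$, $B\in\mathcal{B}$. For a family $\mathcal{F}$ of sets and indices $i,j$, the shift operation is defined for $F\in\mathcal{F}$ by $S_{ij}(F)=(F\setminus\{j\})\cup\{i\}$ if $j\in F$, $i\notin F$ and $(F\setminus\{j\})\cup\{i\}\notin\mathcal{F}$, and $S_{ij}(F)=F$ otherwise; and $S_{ij}(\mathcal{F})=\{S_{ij}(F):F\in\mathcal{F}\}$. *)

(* Defs.v *)
From mathcomp Require Import all_boot.
From mathcomp Require Import finmap.
Set Implicit Arguments. Unset Strict Implicit. Unset Printing Implicit Defensive.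
Local Open Scope fset_scope.

Definition ground (n : nat) : {fset nat} := [fset x | x in iota 1 n].

Definition in_binom (n k : nat) (X : {fset nat}) : bool :=
  (X `<=` ground n) && (#|` X| == k).

Definition cross_t_intersecting (t : nat) (A B : {fset {fset nat}}) : Prop :=
  forall X Y, X \in A -> Y \in B -> t <= #|` (X `&` Y)|.

Definition shift_set (i j : nat) (FF : {fset {fset nat}}) (F : {fset nat})
  : {fset nat} :=
  if [&& j \in F, i \notin F & (i |` (F `\ j)) \notin FF]
  then i |` (F `\ j) else F.

Definition shift_family (i j : nat) (FF : {fset {fset nat}}) : {fset {fset nat}} :=
  [fset shift_set i j FF F | F in FF].

Definition is_threshold_family (n k s : nat) (T : {fset nat})
  (FF : {fset {fset nat}}) : Prop :=
  forall X : {fset nat}, X \in FF <-> (in_binom n k X /\ s <= #|` (X `&` T)|).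

(* Main.v *)
Require Import Defs.
From mathcomp Require Import all_boot.
From mathcomp Require Import finmap.
From mathcomp Require Import zify.
Local Open Scope fset_scope.

Module Helpers.
Set Implicit Arguments. Unset Strict Implicit. Unset Printing Implicit Defensive.

Definition sw (i j x : nat) : nat := if x == i then j else if x == j then i else x.
Definition swS (i j : nat) (X : {fset nat}) : {fset nat} := sw i j @` X.

Lemma sw_inv i j x : sw i j (sw i j x) = x.
Proof.
rewrite /sw; case: (eqVneq x i) => [->|xi].
  rewrite eqxx; case: (eqVneq j i) => [->|ji] //; by rewrite eqxx.
case: (eqVneq x j) => [->|xj]; first by rewrite eqxx.
by rewrite (negPf xi) (negPf xj).
Qed.

Lemma in_swS i j X x : (x \in swS i j X) = (sw i j x \in X).
Proof.
apply/imfsetP/idP => [[y yX ->]|h]; first by rewrite sw_inv.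
by exists (sw i j x) => //; rewrite sw_inv.
Qed.

Lemma swS_inv i j X : swS i j (swS i j X) = X.
Proof. by apply/fsetP => x; rewrite !in_swS sw_inv. Qed.

Lemma card_swS i j X : #|` swS i j X| = #|` X|.
Proof. rewrite card_imfset //; exact: (can_inj (@sw_inv i j)). Qed.


Lemma shift_eq i j X : j \in X -> i \notin X -> i |` (X `\ j) = swS i j X.
Proof.
move=> jX iX; apply/fsetP => x; rewrite in_swS !inE /sw.
case: (eqVneq x i) => [->|xi] /=; first by rewrite (esym jX).
case: (eqVneq x j) => [->|xj] //=.
by rewrite (negPf iX).
Qed.

Lemma swS_id i j X : (i \in X) = (j \in X) -> swS i j X = X.
Proof.
move=> h; apply/fsetP => x; rewrite in_swS /sw.
case: (eqVneq x i) => [->|xi] /=; first exact: (esym h).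
case: (eqVneq x j) => [->|xj] //=.
Qed.

Lemma swS_I i j X Y : i \in X -> j \notin X -> j \notin Y ->
  swS i j X `&` Y = (X `&` Y) `\ i.
Proof.
move=> iX jX jY; apply/fsetP => x; rewrite !inE in_swS /sw.
case: (eqVneq x i) => [->|xi] /=; first by rewrite (negPf jX).
case: (eqVneq x j) => [->|xj] /=; by rewrite ?(negPf jY) ?andbF.
Qed.

Lemma swS_I_card i j X Y : i \in X -> j \notin X -> j \notin Y -> i \in Y ->
  (#|` swS i j X `&` Y| + 1)%N = #|` X `&` Y|.
Proof.
move=> iX jX jY iY; rewrite swS_I // [RHS](cardfsD1 i) !inE iX iY /=.
by rewrite addnC.
Qed.


Lemma shift_set_mem i j (FF : {fset {fset nat}}) (X : {fset nat}) : X \in FF -> shift_set i j FF X \in shift_family i j FF.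
Proof. by move=> XF; apply: in_imfset. Qed.

Lemma F1 i j (FF : {fset {fset nat}}) (X : {fset nat}) : X \in FF -> ~~ ((j \in X) && (i \notin X)) ->
  X \in shift_family i j FF.
Proof.
move=> XF h; have := shift_set_mem i j XF.
rewrite /shift_set; case: (boolP (j \in X)) h => //= jX.
by rewrite negbK => ->.
Qed.

Lemma F1' i j (FF : {fset {fset nat}}) (X : {fset nat}) : X \in FF -> swS i j X \in FF -> X \in shift_family i j FF.
Proof.
move=> XF sXF; have := shift_set_mem i j XF.
rewrite /shift_set; case: (boolP (j \in X)) => //= jX.
case: (boolP (i \in X)) => //= iX.
by rewrite shift_eq // sXF.
Qed.

Lemma F2 i j (FF : {fset {fset nat}}) (X : {fset nat}) : i != j -> X \in FF -> j \in X -> i \notin X ->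
  swS i j X \in shift_family i j FF.
Proof.
move=> ij XF jX iX.
case: (boolP (swS i j X \in FF)) => h.
  apply: F1 => //; rewrite !in_swS /sw eqxx eq_sym (negPf ij).
  by rewrite (negPf iX).
have := shift_set_mem i j XF.
by rewrite /shift_set jX iX shift_eq // h.
Qed.

Lemma F5 i j (FF : {fset {fset nat}}) (Y : {fset nat}) : Y \in shift_family i j FF -> Y \in FF \/ swS i j Y \in FF.
Proof.
case/imfsetP => X XF ->; rewrite /shift_set.
case: ifP => [/and3P [jX iX _]|_]; last by left.
by right; rewrite shift_eq // swS_inv.
Qed.

Lemma card_shift i j (FF : {fset {fset nat}}) : #|` shift_family i j FF| = #|` FF|.
Proof.
rewrite card_in_imfset //= => X Y XF YF.
rewrite /shift_set.
case: ifP => [/and3P [jX iX nX]|hX]; case: ifP => [/and3P [jY iY nY]|hY].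
- rewrite !shift_eq // => /(congr1 (swS i j)); by rewrite !swS_inv.
- move=> e; move: nX; by rewrite e YF.
- move=> e; move: nY; by rewrite -e XF.
- done.
Qed.


Lemma exists_sub (X : {fset nat}) s : (s <= #|` X|)%N ->
  exists Y : {fset nat}, Y `<=` X /\ #|` Y| = s.
Proof.
move=> hs; exists [fset x in take s (enum_fset X)]; split.
  apply/fsubsetP => x; rewrite inE => /mem_take; done.
rewrite card_fseq undup_id ?size_take_min.
  by apply/minn_idPl.
exact/take_uniq/fset_uniq.
Qed.

Lemma card_ground m : #|` ground m| = m.
Proof.
rewrite /ground card_fseq undup_id ?size_iota //; exact: iota_uniq.
Qed.

Lemma in_ground m x : (x \in ground m) = (1 <= x <= m)%N.
Proof. rewrite /ground inE mem_iota; lia. Qed.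

Lemma cardU_disj (A B : {fset nat}) : (forall x, x \in A -> x \notin B) ->
  #|` A `|` B| = (#|` A| + #|` B|)%N.
Proof.
move=> h; have := cardfsUI A B.
suff -> : A `&` B = fset0 by rewrite cardfs0 addn0.
apply/fsetP => x; rewrite !inE; case: (boolP (x \in A)) => //= /h.
by move/negPf.
Qed.


Lemma cardGY (T I S Q Y : {fset nat}) :
  S `<=` I -> S `<=` Y -> (forall x, x \in Q -> x \notin Y) ->
  #|` ((T `\` I) `|` S `|` Q) `&` Y| = (#|` (T `\` I) `&` Y| + #|` S|)%N.
Proof.
move=> SI SY QY.
rewrite !fsetIUl.
have -> : Q `&` Y = fset0.
  apply/fsetP => x; rewrite !inE; case: (boolP (x \in Q)) => //= /QY /negPf //.
rewrite fsetU0 (fsetIidPl SY) cardU_disj // => x; rewrite !inE => /andP [/andP [xI _] _].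
by apply/negP => /(fsubsetP SI); rewrite (negPf xI).
Qed.

Lemma E m k l t r i j (T H H' : {fset nat}) :
  T `<=` ground m -> #|` T| = (t + 2 * r)%N -> i \in T -> j \notin T -> (2 <= t)%N ->
  (t + r <= l)%N -> (k + l - t + 2 <= m)%N -> #|` H| = k -> #|` H'| = k ->
  i \in H -> i \in H' ->
  #|` H `&` T| = (t + r)%N -> #|` H' `&` T| = (t + r)%N -> (#|` H `|` H'| <= k.+1)%N ->
  exists G : {fset nat}, [/\ in_binom m l G, (i \in G) && (j \notin G),
      #|` G `&` T| = (t + r)%N, #|` G `&` H| = t & #|` G `&` H'| = t].
Proof.
move=> Tm cT iT jT t2 trl klm cH cH' iH iH' cW cW' cHH.
pose I := (H `&` T) `&` (H' `&` T).
have iI : i \in I by rewrite /I !inE iH iH' iT.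
have IW : I `<=` H `&` T := fsubsetIl _ _.
have IW' : I `<=` H' `&` T := fsubsetIr _ _.
have IT : I `<=` T := fsubset_trans IW (fsubsetIr _ _).
have IH : I `<=` H := fsubset_trans IW (fsubsetIl _ _).
have IH' : I `<=` H' := fsubset_trans IW' (fsubsetIl _ _).
have cI1 : (t + r - 1 <= #|` I|)%N.
  have h1 := cardfsUI (H `&` T) (H' `&` T).
  have h2 : (#|` (H `&` T) `|` (H' `&` T)| <= #|` H `&` T| + #|` H' `\` H|)%N.
    have : (H `&` T) `|` (H' `&` T) `<=` (H `&` T) `|` (H' `\` H).
      apply/fsubsetP => x; rewrite !inE.
      by case: (x \in H); case: (x \in T); case: (x \in H').
    move/fsubset_leq_card => h; apply: leq_trans h _.
    have := cardfsUI (H `&` T) (H' `\` H). clear. lia.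
  have h3 := cardfsUI H H'. have h4 := cardfsID H H'.
  rewrite fsetIC in h4. rewrite -/I in h1. clear -h1 h2 h3 h4 cW cW' cH cH' cHH. lia.
have cI2 : (#|` I| <= t + r)%N by rewrite -cW; apply: fsubset_leq_card.
have cIi : #|` I `\ i| = (#|` I| - 1)%N by rewrite [#|` I|](cardfsD1 i) iI; clear; lia.
have [S0 [S0s cS0]] := exists_sub (s := (#|` I| - r - 1)%N) (X := I `\ i) ltac:(clear -cIi; lia).
pose S := i |` S0.
have iS0 : i \notin S0.
  apply/negP => /(fsubsetP S0s); by rewrite fsetD11.
have SI : S `<=` I.
  apply/fsubsetP => x /fset1UP [-> //|/(fsubsetP S0s)].
  by case/fsetD1P.
have cS : #|` S| = (#|` I| - r)%N by rewrite /S cardfsU1 iS0 cS0; clear -cI1 cI2 t2; lia.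
pose Z := j |` (T `|` (H `|` H')).
have cZ : (#|` Z| <= k + r + 2)%N.
  rewrite /Z cardfsU1.
  have h1 := cardfsUI T (H `|` H').
  have h2 : (#|` H `&` T| <= #|` T `&` (H `|` H')|)%N.
    apply: fsubset_leq_card; apply/fsubsetP => x; rewrite !inE.
    by case: (x \in H); case: (x \in T).
  clear -h1 h2 cT cH cH' cHH cW; case: (j \notin _); lia.
have croom : (l - t - r <= #|` ground m `\` Z|)%N.
  rewrite cardfsD card_ground.
  have : (#|` ground m `&` Z| <= #|` Z|)%N by apply: fsubset_leq_card; apply: fsubsetIr.
  clear -cZ klm t2 trl; lia.
have [Q [Qs cQ]] := exists_sub croom.
have QZ : forall x, x \in Q -> (x \in ground m) && (x \notin Z).
  by move=> x /(fsubsetP Qs); rewrite !inE andbC.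
pose G := (T `\` I) `|` S `|` Q.
have ST : S `<=` T := fsubset_trans SI IT.
have SH : S `<=` H := fsubset_trans SI IH.
have SH' : S `<=` H' := fsubset_trans SI IH'.
have QT : forall x, x \in Q -> x \notin T.
  by move=> x /QZ /andP [_]; rewrite /Z !inE; apply: contra => ->; rewrite orbT.
have QH : forall x, x \in Q -> x \notin H.
  by move=> x /QZ /andP [_]; rewrite /Z !inE; apply: contra => ->; rewrite !orbT.
have QH' : forall x, x \in Q -> x \notin H'.
  by move=> x /QZ /andP [_]; rewrite /Z !inE; apply: contra => ->; rewrite !orbT.
have cTI : #|` T `\` I| = (#|` T| - #|` I|)%N by apply: cardfsDS.
exists G; split.
- rewrite /in_binom; apply/andP; split.
    apply/fsubsetP => x /fsetUP [/fsetUP [/fsetDP [xT _]|/(fsubsetP ST) xT]|/QZ /andP [] //].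
    + exact: (fsubsetP Tm).
    + exact: (fsubsetP Tm).
  apply/eqP; rewrite /G cardU_disj; last first.
    move=> x /fsetUP [/fsetDP [xT _]|/(fsubsetP ST) xT]; by apply/negP => /QT; rewrite xT.
  rewrite cardU_disj; last first.
    move=> x /fsetDP [_ xI]; by apply/negP => /(fsubsetP SI); rewrite (negPf xI).
  rewrite cTI cS cQ cT; clear -cI1 cI2 t2 trl; lia.
- apply/andP; split.
    apply/fsetUP; left; apply/fsetUP; right; exact: fset1U1.
  apply/negP => /fsetUP [/fsetUP [/fsetDP [jT' _]|/(fsubsetP ST) jT']|/QZ /andP [_]].
  + by rewrite jT' in jT.
  + by rewrite jT' in jT.
  + by rewrite /Z fset1U1.
- rewrite /G (cardGY _ SI ST QT).
  rewrite (fsetIidPl (fsubsetDl _ _)) cTI cS cT; clear -cI1 cI2 t2; lia.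
- rewrite /G (cardGY _ SI SH QH).
  have -> : (T `\` I) `&` H = (H `&` T) `\` I.
    by apply/fsetP => x; rewrite !inE; case: (x \in H); case: (x \in T); case: (x \in H').
  rewrite cardfsDS // cS cW; clear -cI1 cI2 t2; lia.
- rewrite /G (cardGY _ SI SH' QH').
  have -> : (T `\` I) `&` H' = (H' `&` T) `\` I.
    by apply/fsetP => x; rewrite !inE; case: (x \in H'); case: (x \in T); case: (x \in H).
  rewrite cardfsDS // cS cW'; clear -cI1 cI2 t2; lia.
Qed.


Definition amb (n k i j : nat) (T : {fset nat}) (s : nat) (H : {fset nat}) : Prop :=
  [/\ in_binom n k H, i \in H, j \notin H & #|` H `&` T| = s].

Lemma cross_sym t (A B : {fset {fset nat}}) :
  cross_t_intersecting t A B -> cross_t_intersecting t B A.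
Proof. by move=> h X Y XB YA; rewrite fsetIC; apply: h. Qed.

Lemma Step m l t s i j (A B : {fset {fset nat}}) (T H G : {fset nat}) :
  cross_t_intersecting t A B ->
  is_threshold_family m l s T (shift_family i j B) ->
  swS i j H \in A -> i \in H -> j \notin H ->
  in_binom m l G -> i \in G -> j \notin G -> (s <= #|` G `&` T|)%N ->
  #|` G `&` H| = t -> swS i j G \in B.
Proof.
move=> cr th sHA iH jH bG iG jG cGT cGH.
have : G \in shift_family i j B by apply/th.
case/F5 => // GB.
have := cr _ _ sHA GB.
rewrite fsetIC in cGH. have := swS_I_card iH jH jG iG. rewrite cGH.
move=> e; clear -e; lia.
Qed.

Lemma exists_diff (P0 P1 : {fset nat}) x : #|` P0| = #|` P1| -> x \in P1 -> x \notin P0 ->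
  exists2 y, y \in P0 & y \notin P1.
Proof.
move=> c xP1 xP0; case: (boolP (P0 `<=` P1)) => [sub|].
  have : P0 == P1 by rewrite eqEfcard sub c leqnn.
  by move/eqP => e; rewrite e xP1 in xP0.
by move/fsubsetPn => [y y0 y1]; exists y.
Qed.

Lemma cardI_swap (X T : {fset nat}) x y : x \in X -> y \notin X -> (x \in T) = (y \in T) ->
  #|` (y |` (X `\ x)) `&` T| = #|` X `&` T|.
Proof.
move=> xX yX xyT.
case: (boolP (x \in T)) => xT.
  have yT : y \in T by rewrite -xyT.
  have -> : (y |` (X `\ x)) `&` T = y |` ((X `&` T) `\ x).
    apply/fsetP => z; rewrite !inE.
    case: (eqVneq z y) => [->|zy] /=; first by rewrite yT.
    by case: (z \in T); case: (z \in X); case: (z == x).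
  rewrite cardfsU1 !inE (negPf yX) andbF /=.
  rewrite [RHS](cardfsD1 x) !inE xX xT /=.
  by [].
have yT : y \notin T by rewrite -xyT.
have -> : (y |` (X `\ x)) `&` T = X `&` T.
  apply/fsetP => z; rewrite !inE.
  case: (eqVneq z y) => [->|zy] /=; first by rewrite (negPf yT) (negPf yX).
  case: (eqVneq z x) => [->|zx] /=; first by rewrite (negPf xT) andbF.
  done.
done.
Qed.


Lemma Mid n k i j T s H0 H1 x : amb n k i j T s H0 -> amb n k i j T s H1 ->
  x \in H1 -> x \notin H0 ->
  exists H', [/\ amb n k i j T s H', (#|` H' `\` H0| < #|` H1 `\` H0|)%N
                & (#|` H' `|` H1| <= k.+1)%N].
Proof.
case => /andP [H0n /eqP c0] iH0 jH0 t0; case => /andP [H1n /eqP c1] iH1 jH1 t1 xH1 xH0.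
pose f := fun H => if x \in T then H `&` T else H `\` T.
have cf : #|` f H0| = #|` f H1|.
  rewrite /f; case: ifP => _; first by rewrite t0 t1.
  have := cardfsID T H0; have := cardfsID T H1.
  rewrite t0 t1 c0 c1; clear; lia.
have x1 : x \in f H1 by rewrite /f; case: (boolP (x \in T)) => xT; rewrite !inE xH1 xT.
have x0 : x \notin f H0 by rewrite /f; case: (boolP (x \in T)) => xT; rewrite !inE (negPf xH0) ?andbF.
have [y y0 y1] := exists_diff cf x1 x0.
have [yH0 yH1 xyT] : [/\ y \in H0, y \notin H1 & (x \in T) = (y \in T)].
  move: y0 y1; rewrite /f; case: (boolP (x \in T)) => xT; rewrite !inE.
  + by case/andP => -> ->; case: (y \in H1).
  + by case/andP => /negPf -> ->; case: (y \in H1).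
have xy : x != y by apply/negP => /eqP e; move: xH0; rewrite e yH0.
have iy : i != x by apply/negP => /eqP e; move: xH0; rewrite -e iH0.
have jy : j != y by apply/negP => /eqP e; move: jH0; rewrite e yH0.
exists (y |` (H1 `\ x)); split.
- split.
  + apply/andP; split.
      apply/fsubsetP => z /fset1UP [->|/fsetD1P [_ zH1]].
      * exact: (fsubsetP H0n).
      * exact: (fsubsetP H1n).
    rewrite cardfsU1 in_fsetD1 (negPf yH1) andbF /=.
    have := cardfsD1 x H1; rewrite xH1 c1 => e; apply/eqP; by rewrite e.
  + by apply/fset1UP; right; apply/fsetD1P; split.
  + apply/negP => /fset1UP [/eqP|/fsetD1P [_ jH1']]; first by rewrite (negPf jy).
    by rewrite jH1' in jH1.
  + by rewrite cardI_swap.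
- have sub : (y |` (H1 `\ x)) `\` H0 `<=` (H1 `\` H0) `\ x.
    apply/fsubsetP => z /fsetDP [/fset1UP [->|/fsetD1P [zx zH1]] zH0].
      by rewrite yH0 in zH0.
    by apply/fsetD1P; split => //; apply/fsetDP.
  move/fsubset_leq_card: sub; have := cardfsD1 x (H1 `\` H0).
  have -> : x \in H1 `\` H0 by apply/fsetDP.
  move=> e1 e2; clear -e1 e2; lia.
- have sub : (y |` (H1 `\ x)) `|` H1 `<=` y |` H1.
    apply/fsubsetP => z /fsetUP [/fset1UP [->|/fsetD1P [_ zH1]]|zH1].
    + exact: fset1U1.
    + by apply/fset1UP; right.
    + by apply/fset1UP; right.
  move/fsubset_leq_card: sub; rewrite cardfsU1 c1 (negPf yH1) /=.
  done.
Qed.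


Lemma sub_eq (X Y : {fset nat}) : X `<=` Y -> #|` X| = #|` Y| -> X = Y.
Proof. by move=> s c; apply/eqP; rewrite eqEfcard s c leqnn. Qed.

Lemma Chain n k m l t r i j (A B : {fset {fset nat}}) (T : {fset nat}) :
  cross_t_intersecting t A B ->
  is_threshold_family n k (t + r) T (shift_family i j A) ->
  is_threshold_family m l (t + r) T (shift_family i j B) ->
  T `<=` ground m -> #|` T| = (t + 2 * r)%N -> i \in T -> j \notin T -> (2 <= t)%N ->
  (t + r <= l)%N -> (k + l - t + 2 <= m)%N ->
  forall H0 H1, amb n k i j T (t + r) H0 -> amb n k i j T (t + r) H1 ->
  swS i j H0 \in A -> swS i j H1 \in A.
Proof.
move=> cr thA thB Tm cT iT jT t2 trl klm H0 H1 a0 a1 s0.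
move: {2}#|` H1 `\` H0| (leqnn #|` H1 `\` H0|) => d.
elim: d H1 a1 => [|d IH] H1 a1 hd;
  case: (boolP (H1 `<=` H0)) => sub.
- have -> // : H1 = H0.
  apply: sub_eq => //; case: a0 => /andP [_ /eqP ->] _ _ _; case: a1 => /andP [_ /eqP ->] _ _ _ //.
- exfalso; move: hd; rewrite leqn0 cardfs_eq0 fsetD_eq0; by rewrite (negPf sub).
- have -> // : H1 = H0.
  apply: sub_eq => //; case: a0 => /andP [_ /eqP ->] _ _ _; case: a1 => /andP [_ /eqP ->] _ _ _ //.
move/fsubsetPn: sub => [x xH1 xH0].
have [H' [a' lt' cu]] := Mid a0 a1 xH1 xH0.
have sH' : swS i j H' \in A by apply: IH a' _; clear -lt' hd; lia.
case: (a') => /andP [_ /eqP cH'] iH' jH' tH'.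
case: (a1) => /andP [bH1 /eqP cH1] iH1 jH1 tH1.
have [G [bG /andP [iG jG] cGT cGH' cGH1]] :=
  E Tm cT iT jT t2 trl klm cH' cH1 iH' iH1 tH' tH1 cu.
have sG : swS i j G \in B.
  apply: (Step cr thB sH') => //; by rewrite cGT.
apply: (Step (cross_sym cr) thA sG) => //.
- by apply/andP; split => //; apply/eqP.
- by rewrite tH1.
- by rewrite fsetIC.
Qed.


Lemma swS_le i j (X T : {fset nat}) : j \in X -> i \notin X -> ~~ ((i \in T) && (j \notin T)) ->
  (#|` swS i j X `&` T| <= #|` X `&` T|)%N.
Proof.
move=> jX iX h.
case: (boolP (i \in T)) h => iT /= h.
  have jT : j \in T by rewrite negbK in h.
  have -> : swS i j X `&` T = swS i j (X `&` T).
    apply/fsetP => z; rewrite !inE !in_swS !inE /sw.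
    case: (eqVneq z i) => [->|zi]; first by rewrite iT jT.
    case: (eqVneq z j) => [->|zj]; first by rewrite iT jT.
    done.
  by rewrite card_swS.
apply: fsubset_leq_card; apply/fsubsetP => z; rewrite !inE in_swS /sw.
case: (eqVneq z i) => [->|zi]; first by rewrite (negPf iT) andbF.
case: (eqVneq z j) => [->|zj]; first by rewrite (negPf iX).
done.
Qed.

Lemma Good N K t r i j (FF : {fset {fset nat}}) (T Z : {fset nat}) :
  i != j -> i \in T -> j \notin T ->
  is_threshold_family N K (t + r) T (shift_family i j FF) -> Z \in FF ->
  (amb N K i j T (t + r) Z -> swS i j Z \in FF) ->
  (t + r <= #|` swS i j Z `&` T|)%N.
Proof.
move=> ij iT jT th ZF ha.
case: (boolP ((j \in Z) && (i \notin Z))) => [/andP [jZ iZ]|h].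
  have hs := F2 ij ZF jZ iZ.
  by case: (th (swS i j Z)) => [h _]; case: (h hs).
have hs := F1 ZF h.
have [bZ cZ] := (th Z).1 hs.
case: (boolP ((i \in Z) && (j \notin Z))) => [/andP [iZ jZ]|h2].
  have e := swS_I_card iZ jZ jT iT.
  case: (eqVneq #|` Z `&` T| (t + r)%N) => [e2|ne].
    have hs2 : swS i j Z \in shift_family i j FF.
      have sZ : swS i j Z \in FF by apply: ha; split.
      by apply: (F1' sZ); rewrite swS_inv.
    by case: (th (swS i j Z)) => [h0 _]; case: (h0 hs2).
  clear -e ne cZ; lia.
rewrite swS_id //.
move: h h2; case: (i \in Z); case: (j \in Z) => //.
Qed.


Lemma M n k m l t r i j (A B : {fset {fset nat}}) (T X : {fset nat}) :
  i != j ->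
  (forall X, X \in A -> in_binom n k X) ->
  (forall Y, Y \in B -> in_binom m l Y) ->
  cross_t_intersecting t A B ->
  T `<=` ground m -> T `<=` ground n -> #|` T| = (t + 2 * r)%N -> (2 <= t)%N ->
  (t + r <= l)%N -> (t + r <= k)%N ->
  (k + l - t + 2 <= m)%N -> (k + l - t + 2 <= n)%N ->
  is_threshold_family n k (t + r) T (shift_family i j A) ->
  is_threshold_family m l (t + r) T (shift_family i j B) ->
  X \in A -> (#|` X `&` T| < t + r)%N ->
  [/\ i \in T, j \notin T, j \in ground n, j \in ground m &
     (forall Z, Z \in A -> (t + r <= #|` swS i j Z `&` T|)%N) /\
     (forall Z, Z \in B -> (t + r <= #|` swS i j Z `&` T|)%N)].
Proof.
move=> ij bA bB cr Tm Tn cT t2 trl trk klm kln thA thB XA cX.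
have [jX iX] : (j \in X) /\ (i \notin X).
  case: (boolP ((j \in X) && (i \notin X))) => [/andP [] //|h].
  have hs := F1 XA h.
  have [_ h2] := (thA X).1 hs.
  exfalso; clear -h2 cX; lia.
have HS := F2 ij XA jX iX.
have [bH cH] := (thA _).1 HS.
have [iT jT] : (i \in T) /\ (j \notin T).
  case: (boolP ((i \in T) && (j \notin T))) => [/andP [] //|h].
  have := swS_le jX iX h. move=> H; exfalso; clear -H cH cX; lia.
have iH : i \in swS i j X by rewrite in_swS /sw eqxx.
have jH : j \notin swS i j X by rewrite in_swS /sw eq_sym (negPf ij) eqxx.
have tH : #|` swS i j X `&` T| = (t + r)%N.
  have := swS_I_card iH jH jT iT; rewrite swS_inv => e.
  clear -e cH cX; lia.
have aH : amb n k i j T (t + r) (swS i j X) by [].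
have sH : swS i j (swS i j X) \in A by rewrite swS_inv.
have jn : j \in ground n by case/andP: (bA X XA) => /fsubsetP h _; apply: h.
have cHk : #|` swS i j X| = k by case/andP: bH => _ /eqP.
have cu : (#|` swS i j X `|` swS i j X| <= k.+1)%N by rewrite fsetUid cHk.
have [G [bG /andP [iG jG] cGT cGH _]] := E Tm cT iT jT t2 trl klm cHk cHk iH iH tH tH cu.
have sG : swS i j G \in B.
  by apply: (Step cr thB sH) => //; rewrite cGT.
have jm : j \in ground m.
  case/andP: (bB _ sG) => /fsubsetP h _; apply: h.
  by rewrite in_swS /sw eq_sym (negPf ij) eqxx.
split => //; split => Z ZF.
- apply: (Good ij iT jT thA ZF) => aZ.
  exact: (Chain cr thA thB Tm cT iT jT t2 trl klm aH aZ sH).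
- apply: (Good ij iT jT thB ZF) => aZ.
  case: (aZ) => /andP [_ /eqP cZl] iZ jZ tZ.
  have lkn : (l + k - t + 2 <= n)%N by clear -kln; lia.
  have cuZ : (#|` Z `|` Z| <= l.+1)%N by rewrite fsetUid cZl.
  have [H2 [bH2 /andP [iH2 jH2] tH2 cH2Z _]] := E Tn cT iT jT t2 trk lkn cZl cZl iZ iZ tZ tZ cuZ.
  have aH2 : amb n k i j T (t + r) H2 by [].
  have sH2 := Chain cr thA thB Tm cT iT jT t2 trl klm aH aH2 sH.
  apply: (Step cr thB sH2) => //; first by case: aZ.
  - by rewrite tZ.
  - by rewrite fsetIC.
Qed.


Lemma sw_in i j (G : {fset nat}) z : i \in G -> j \in G -> (sw i j z \in G) = (z \in G).
Proof.
move=> iG jG; rewrite /sw.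
case: (eqVneq z i) => [->|zi]; first by rewrite iG jG.
case: (eqVneq z j) => [->|zj]; first by rewrite iG jG.
done.
Qed.

Lemma swS_sub i j (G X : {fset nat}) : i \in G -> j \in G -> (swS i j X `<=` G) = (X `<=` G).
Proof.
move=> iG jG; apply/fsubsetP/fsubsetP => h z.
  move=> zX; rewrite -(sw_in z iG jG); apply: h; by rewrite in_swS sw_inv.
by rewrite in_swS => /h; rewrite sw_in.
Qed.

Lemma binom_swS n k i j X : i \in ground n -> j \in ground n ->
  in_binom n k (swS i j X) = in_binom n k X.
Proof. by move=> iG jG; rewrite /in_binom swS_sub // card_swS. Qed.

Lemma swS_IT i j (X T : {fset nat}) : #|` swS i j X `&` T| = #|` X `&` swS i j T|.
Proof.
have -> : swS i j X `&` T = swS i j (X `&` swS i j T).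
  by apply/fsetP => z; rewrite !inE !in_swS !inE in_swS sw_inv.
by rewrite card_swS.
Qed.

Lemma FinT n k s (T : {fset nat}) (FF : {fset {fset nat}}) i j :
  (forall X, X \in FF -> in_binom n k X) ->
  is_threshold_family n k s T (shift_family i j FF) ->
  (forall X, X \in FF -> (s <= #|` X `&` T|)%N) ->
  is_threshold_family n k s T FF.
Proof.
move=> bF th g.
have sub : FF `<=` shift_family i j FF.
  by apply/fsubsetP => X XF; apply/th; split; [apply: bF | apply: g].
have e : FF = shift_family i j FF.
  by apply/eqP; rewrite eqEfcard sub card_shift leqnn.
by rewrite {1}e.
Qed.

Lemma FinSw n k s (T : {fset nat}) (FF : {fset {fset nat}}) i j :
  i \in ground n -> j \in ground n ->
  (forall X, X \in FF -> in_binom n k X) ->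
  is_threshold_family n k s T (shift_family i j FF) ->
  (forall X, X \in FF -> (s <= #|` swS i j X `&` T|)%N) ->
  is_threshold_family n k s (swS i j T) FF.
Proof.
move=> iG jG bF th g.
pose FF' := [fset swS i j X | X in shift_family i j FF].
have mem' : forall X, (X \in FF') = (swS i j X \in shift_family i j FF).
  move=> X; apply/imfsetP/idP => [[Y YS ->]|h]; first by rewrite swS_inv.
  by exists (swS i j X) => //; rewrite swS_inv.
have sub : FF `<=` FF'.
  apply/fsubsetP => X XF; rewrite mem'; apply/th; split.
    by rewrite binom_swS //; apply: bF.
  exact: g.
have e : FF = FF'.
  apply/eqP; rewrite eqEfcard sub /=.
  apply: leq_trans (leq_imfset_card _ _ _) _.
  by rewrite -(card_shift i j FF).
move=> X; rewrite e mem'; split.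
  by move/th => [b c]; split; [rewrite -(binom_swS _ _ iG jG) | rewrite -swS_IT].
by move=> [b c]; apply/th; split; [rewrite binom_swS | rewrite swS_IT].
Qed.

End Helpers.
Import Helpers.

Theorem theorem4p5 (m n k l t r : nat) (i j : nat)
  (A B : {fset {fset nat}}) (T : {fset nat}) :
  0 < m -> 0 < n -> 0 < k -> 0 < l -> 0 < t -> 0 < r ->
  2 <= t -> l <= k -> t + r <= l ->
  k + l - t + 2 <= minn m n ->
  1 <= i -> i < j -> j <= maxn m n ->
  (forall X, X \in A -> in_binom n k X) ->
  (forall Y, Y \in B -> in_binom m l Y) ->
  cross_t_intersecting t A B ->
  T `<=` ground (minn m n) -> #|` T| = (t + 2 * r)%N ->
  is_threshold_family n k (t + r) T (shift_family i j A) ->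
  is_threshold_family m l (t + r) T (shift_family i j B) ->
  exists T' : {fset nat},
    [/\ T' `<=` ground (minn m n), #|` T'| = (t + 2 * r)%N,
        is_threshold_family n k (t + r) T' A &
        is_threshold_family m l (t + r) T' B].
Proof.
move=> hm hn hk hl ht hr t2 lk trl kl1 i1 ij jmax bA bB cr Tmin cT thA thB.
have ijn : i != j by apply/eqP => e; rewrite e ltnn in ij.
have Tm : T `<=` ground m.
  apply/fsubsetP => z /(fsubsetP Tmin); rewrite !in_ground => /andP [-> h].
  by rewrite (leq_trans h) // geq_minl.
have Tn : T `<=` ground n.
  apply/fsubsetP => z /(fsubsetP Tmin); rewrite !in_ground => /andP [-> h].
  by rewrite (leq_trans h) // geq_minr.
have trk : t + r <= k by clear -lk trl; lia.
have klm : k + l - t + 2 <= m by apply: leq_trans kl1 _; rewrite geq_minl.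
have kln : k + l - t + 2 <= n by apply: leq_trans kl1 _; rewrite geq_minr.
pose badA := has (fun X : {fset nat} => #|` X `&` T| < t + r) A.
pose badB := has (fun X : {fset nat} => #|` X `&` T| < t + r) B.
have finish : i \in T -> j \in ground n -> j \in ground m ->
    (forall Z, Z \in A -> t + r <= #|` swS i j Z `&` T|) ->
    (forall Z, Z \in B -> t + r <= #|` swS i j Z `&` T|) ->
    exists T' : {fset nat},
    [/\ T' `<=` ground (minn m n), #|` T'| = (t + 2 * r)%N,
        is_threshold_family n k (t + r) T' A &
        is_threshold_family m l (t + r) T' B].
  move=> iT jn jm gA gB.
  have iTm := fsubsetP Tmin _ iT.
  have jmin : j \in ground (minn m n).
    move: jn jm; rewrite !in_ground leq_min => /andP [-> ->] /andP [_ ->] //.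
  exists (swS i j T); split.
  - by rewrite swS_sub.
  - by rewrite card_swS.
  - apply: FinSw => //; exact: (fsubsetP Tn).
  - apply: FinSw => //; exact: (fsubsetP Tm).
case: (boolP badA) => [/hasP [X XA cX]|nA].
  have [iT jT jn jm [gA gB]] := M ijn bA bB cr Tm Tn cT t2 trl trk klm kln thA thB XA cX.
  exact: finish.
case: (boolP badB) => [/hasP [X XB cX]|nB].
  have lkn : l + k - t + 2 <= n by clear -kln; lia.
  have lkm : l + k - t + 2 <= m by clear -klm; lia.
  have [iT jT jm jn [gB gA]] :=
    M ijn bB bA (cross_sym cr) Tn Tm cT t2 trk trl lkn lkm thB thA XB cX.
  exact: finish.
exists T; split => //.
- apply: FinT bA thA _ => X XA; move/hasPn: nA => /(_ X XA); rewrite -leqNgt //.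
- apply: FinT bB thB _ => X XB; move/hasPn: nB => /(_ X XB); rewrite -leqNgt //.
Qed.
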